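(* Let $V$ be a real vector space of dimension $m\ge3$ with a positive definite inner product, and let $R\neq0$ be a Jacobi-Tsankov algebraic curvature tensor on $V$ such that $r(x)<m-1$ for all $x\in V$. Let $x\in S(V)$ with $r(x)\neq0$, and set $W(x)=\mathbb{R}x\oplus\operatorname{Range}(J(x))$. If $w$ is a unit vector in $W(x)$, then: \begin{enumerate} \item $\operatorname{Range}(J(w))\subset W(x)$ and $J(w)$ vanishes on $W(x)^\perp$; \item $J(w)$ is similar to $J(x)$; \item $J(x)$ has exactly two eigenvalues. \end{enumerate}
   Context: An algebraic curvature tensor is $R\in\otimes^4V^*$ satisfying $R(x,y,z,w)=R(z,w,x,y)=-R(y,x,z,w)$ and $R(x,y,z,w)+R(y,z,x,w)+R(z,x,y,w)=0$. The curvature operator $\mathcal{R}(x,y)$ is defined by $\langle\mathcal{R}(x,y)z,w\rangle=R(x,y,z,w)$; the Jacobi operator is $J(x):y\mapsto\mathcal{R}(y,x)x$, and $r(x)=\operatorname{Rank}J(x)$. $S(V)$ is the unit sphere of $V$. $R$ is Jacobi-Tsankov if $x\perp y$ implies $J(x)J(y)=J(y)J(x)$. *)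

(* Defs.v *)
From HB Require Import structures.
From mathcomp Require Import all_boot all_order all_algebra.
From mathcomp Require Export mxred.
From mathcomp Require Export reals.
Set Implicit Arguments. Unset Strict Implicit. Unset Printing Implicit Defensive.
Import Order.TTheory GRing.Theory Num.Theory.
Local Open Scope ring_scope.

Definition dot (R : realType) (m : nat) (u v : 'rV[R]_m) : R := (u *m v^T) 0 0.

Definition tensor4 (R : realType) (m : nat) :=
  'rV[R]_m -> 'rV[R]_m -> 'rV[R]_m -> 'rV[R]_m -> R.

Definition multilinear4 (R : realType) (m : nat) (T : tensor4 R m) : Prop :=
  (forall (a : R) u v y z w, T (a *: u + v) y z w = a * T u y z w + T v y z w) /\
  (forall (a : R) x u v z w, T x (a *: u + v) z w = a * T x u z w + T x v z w) /\
  (forall (a : R) x y u v w, T x y (a *: u + v) w = a * T x y u w + T x y v w) /\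
  (forall (a : R) x y z u v, T x y z (a *: u + v) = a * T x y z u + T x y z v).

Definition is_ACT (R : realType) (m : nat) (T : tensor4 R m) : Prop :=
  multilinear4 T /\
  (forall x y z w, T x y z w = T z w x y) /\
  (forall x y z w, T x y z w = - T y x z w) /\
  (forall x y z w, T x y z w + T y z x w + T z x y w = 0).

(* Jacobi operator J(x) : y |-> R(y,x)x, as a matrix acting on row vectors
   (y *m jacobi T x is the vector R(y,x)x, since <R(y,x)x, w> = T y x x w). *)
Definition jacobi (R : realType) (m : nat) (T : tensor4 R m) (x : 'rV[R]_m)
  : 'M[R]_m :=
  \matrix_(i < m, l < m) T (delta_mx 0 i) x x (delta_mx 0 l).

Definition jrank (R : realType) (m : nat) (T : tensor4 R m) (x : 'rV[R]_m) : nat :=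
  \rank (jacobi T x).

Definition jacobi_tsankov (R : realType) (m : nat) (T : tensor4 R m) : Prop :=
  forall x y : 'rV[R]_m, dot x y = 0 ->
    jacobi T x *m jacobi T y = jacobi T y *m jacobi T x.

Definition Wspace (R : realType) (m : nat) (T : tensor4 R m) (x : 'rV[R]_m)
  : 'M[R]_m := (x + jacobi T x)%MS.

(* Main.v *)
Require Import Defs.
From HB Require Import structures.
From mathcomp Require Import all_boot all_order all_algebra.
From mathcomp Require Import mxred reals.
From mathcomp Require Import ring lra.
Set Implicit Arguments. Unset Strict Implicit. Unset Printing Implicit Defensive.
Import Order.TTheory GRing.Theory Num.Theory.
Local Open Scope ring_scope.
Module SymEig.
From mathcomp Require Import spectral sesquilinear complex.

Lemma sym_eig_nz (R : realType) n (M : 'M[R]_n) :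
  M^T = M -> M != 0 -> exists c, c != 0 /\ eigenvalue M c.
Proof.
move=> Msym Mnz.
pose f := (real_complex R).
pose MC := map_mx f M.
have MCh : MC \is hermsymmx.
  apply: realsym_hermsym.
    apply/is_hermitianmxP; rewrite expr0 scale1r map_mx_id //.
    by rewrite /MC map_trmx Msym.
  by apply/mxOverP => i j; rewrite mxE; apply/complex_realP; exists (M i j).
have dreal := hermitian_spectral_diag_real MCh.
have /orthomx_spectralP MCE := hermitian_normalmx MCh.
set P := spectralmx MC in MCE; set d := spectral_diag MC in MCE dreal.
have Pu : P \in unitmx by apply: spectral_unit.
have [i di] : exists i, d 0 i != 0.
  apply/existsP; apply: contraR Mnz; rewrite negb_exists => /forallP d0.
  have dz : diag_mx d = 0.
    apply/matrixP => j k; rewrite !mxE.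
    by move: (d0 j); rewrite negbK => /eqP ->; rewrite mul0rn.
  have : MC = 0 by rewrite MCE dz mulmx0 mul0mx.
  by move/eqP; rewrite map_mx_eq0 => ->.
have /complex_realP [r dr] : d 0 i \is Num.real by have /mxOverP := dreal; apply.
exists r; split.
  by apply: contra di; rewrite dr => /eqP ->.
rewrite eigenvalue_root_char -(fmorph_root f) map_char_poly -eigenvalue_root_char.
have ev : row i P *m MC = d 0 i *: row i P.
  by rewrite {1}MCE rowE !mulmxA mulmxK // -rowE row_diag_mx -scalemxAl.
apply/eigenvalueP; exists (row i P).
  by move: ev; rewrite dr.
apply/negP => /eqP P0.
have := congr1 (mulmx^~ (invmx P)) P0; rewrite /= rowE mulmxK // mul0mx.
by move=> /matrixP /(_ 0 i); rewrite !mxE !eqxx /= => /eqP; rewrite oner_eq0.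
Qed.

End SymEig.
Import SymEig.

Section Base.
Variables (R : realType) (m : nat).
Implicit Types (u v w y z : 'rV[R]_m).

Lemma dotE u v : dot u v = \sum_i u 0 i * v 0 i.
Proof. by rewrite /dot mxE; apply: eq_bigr => i _; rewrite mxE. Qed.

Lemma dotC u v : dot u v = dot v u.
Proof. by rewrite !dotE; apply: eq_bigr => i _; rewrite mulrC. Qed.

Lemma dotDl u v w : dot (u + v) w = dot u w + dot v w.
Proof. by rewrite !dotE -big_split; apply: eq_bigr => i _; rewrite !mxE mulrDl. Qed.

Lemma dotZl a u w : dot (a *: u) w = a * dot u w.
Proof. by rewrite !dotE mulr_sumr; apply: eq_bigr => i _; rewrite !mxE mulrA. Qed.

Lemma dotNl u w : dot (- u) w = - dot u w.
Proof. by rewrite -scaleN1r dotZl mulN1r. Qed.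

Lemma dot0l w : dot 0 w = 0.
Proof. by rewrite -(scale0r 0) dotZl mul0r. Qed.

Lemma dotDr u v w : dot w (u + v) = dot w u + dot w v.
Proof. by rewrite !(dotC w) dotDl. Qed.

Lemma dotZr a u w : dot w (a *: u) = a * dot w u.
Proof. by rewrite !(dotC w) dotZl. Qed.

Lemma dotNr u w : dot w (- u) = - dot w u.
Proof. by rewrite !(dotC w) dotNl. Qed.

Lemma dot0r w : dot w 0 = 0.
Proof. by rewrite dotC dot0l. Qed.

Lemma dotBl u v w : dot (u - v) w = dot u w - dot v w.
Proof. by rewrite dotDl dotNl. Qed.

Lemma dotBr u v w : dot w (u - v) = dot w u - dot w v.
Proof. by rewrite dotDr dotNr. Qed.

Lemma dot_ge0 u : 0 <= dot u u.
Proof. by rewrite dotE; apply: sumr_ge0 => i _; rewrite -expr2 sqr_ge0. Qed.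

Lemma dot_eq0 u : (dot u u == 0) = (u == 0).
Proof.
apply/idP/idP => [|/eqP ->]; last by rewrite dot0l.
rewrite dotE psumr_eq0 => [/allP H|i _]; last by rewrite -expr2 sqr_ge0.
apply/eqP/rowP => i; rewrite mxE; have := H i (mem_index_enum _).
by rewrite /= mulf_eq0 orbb => /eqP.
Qed.

Lemma dot_gt0 u : u != 0 -> 0 < dot u u.
Proof. by move=> nz; rewrite lt_def dot_ge0 dot_eq0 nz. Qed.

Lemma dot_delta u i : dot u (delta_mx 0 i) = u 0 i.
Proof.
rewrite dotE (bigD1 i) //= big1 ?addr0 => [|j ji]; rewrite mxE.
  by rewrite !eqxx mulr1.
by rewrite (negbTE ji) andbF mulr0.
Qed.

Lemma vec_ext u v : (forall w, dot u w = dot v w) -> u = v.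
Proof. by move=> H; apply/rowP => i; rewrite -!dot_delta H. Qed.

Lemma vec_eq0 u : (forall w, dot u w = 0) -> u = 0.
Proof. by move=> H; apply: vec_ext => w; rewrite H dot0l. Qed.

Lemma vec_sum u : u = \sum_i u 0 i *: delta_mx 0 i.
Proof.
apply/rowP => j; rewrite summxE (bigD1 j) //= big1 ?addr0 => [|i ij]; rewrite !mxE.
  by rewrite !eqxx mulr1.
by rewrite eq_sym (negbTE ij) mulr0.
Qed.

Lemma lin_sum (f : 'rV[R]_m -> R) :
  (forall a u v, f (a *: u + v) = a * f u + f v) ->
  forall u, f u = \sum_i u 0 i * f (delta_mx 0 i).
Proof.
move=> fl u; have f0 : f 0 = 0.
  have := fl 1 0 0; rewrite scaler0 addr0 mul1r => H.
  by apply: (addrI (f 0)); rewrite addr0 -H.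
rewrite {1}(vec_sum u); elim: (index_enum _) => [|i s IH].
  by rewrite !big_nil.
by rewrite !big_cons fl IH.
Qed.

End Base.

Section Lin.
Variables (R : realType) (m : nat).
Variable f : 'rV[R]_m -> R.
Hypothesis fl : forall a u v, f (a *: u + v) = a * f u + f v.
Lemma lin0 : f 0 = 0.
Proof. have := fl 1 0 0. rewrite scaler0 addr0 mul1r => H.
by apply: (addrI (f 0)); rewrite addr0 -H. Qed.
Lemma linD u v : f (u + v) = f u + f v.
Proof. by have := fl 1 u v; rewrite scale1r mul1r. Qed.
Lemma linZ a u : f (a *: u) = a * f u.
Proof. by rewrite -[a *: u]addr0 fl lin0 addr0. Qed.
Lemma linN u : f (- u) = - f u.
Proof. by rewrite -scaleN1r linZ mulN1r. Qed.
End Lin.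

Section Tensor.
Variables (R : realType) (m : nat) (T : tensor4 R m).
Hypothesis hT : is_ACT T.
Implicit Types (a b c d u v w y z : 'rV[R]_m).

Let l1 b c d : forall k u v, T (k *: u + v) b c d = k * T u b c d + T v b c d.
Proof. by move=> k u v; case: hT => [[H _] _]; apply: H. Qed.
Let l2 a c d : forall k u v, T a (k *: u + v) c d = k * T a u c d + T a v c d.
Proof. by move=> k u v; case: hT => [[_ [H _]] _]; apply: H. Qed.
Let l3 a b d : forall k u v, T a b (k *: u + v) d = k * T a b u d + T a b v d.
Proof. by move=> k u v; case: hT => [[_ [_ [H _]]] _]; apply: H. Qed.
Let l4 a b c : forall k u v, T a b c (k *: u + v) = k * T a b c u + T a b c v.
Proof. by move=> k u v; case: hT => [[_ [_ [_ H]]] _]; apply: H. Qed.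

Lemma T1D u v b c d : T (u + v) b c d = T u b c d + T v b c d.
Proof. exact: (linD (l1 b c d)). Qed.
Lemma T2D u v a c d : T a (u + v) c d = T a u c d + T a v c d.
Proof. exact: (linD (l2 a c d)). Qed.
Lemma T3D u v a b d : T a b (u + v) d = T a b u d + T a b v d.
Proof. exact: (linD (l3 a b d)). Qed.
Lemma T4D u v a b c : T a b c (u + v) = T a b c u + T a b c v.
Proof. exact: (linD (l4 a b c)). Qed.
Lemma T1Z k u b c d : T (k *: u) b c d = k * T u b c d.
Proof. exact: (linZ (l1 b c d)). Qed.
Lemma T2Z k u a c d : T a (k *: u) c d = k * T a u c d.
Proof. exact: (linZ (l2 a c d)). Qed.
Lemma T3Z k u a b d : T a b (k *: u) d = k * T a b u d.
Proof. exact: (linZ (l3 a b d)). Qed.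
Lemma T4Z k u a b c : T a b c (k *: u) = k * T a b c u.
Proof. exact: (linZ (l4 a b c)). Qed.
Lemma T1N u b c d : T (- u) b c d = - T u b c d.
Proof. exact: (linN (l1 b c d)). Qed.
Lemma T2N u a c d : T a (- u) c d = - T a u c d.
Proof. exact: (linN (l2 a c d)). Qed.
Lemma T3N u a b d : T a b (- u) d = - T a b u d.
Proof. exact: (linN (l3 a b d)). Qed.
Lemma T4N u a b c : T a b c (- u) = - T a b c u.
Proof. exact: (linN (l4 a b c)). Qed.
Lemma T10 b c d : T 0 b c d = 0. Proof. exact: (lin0 (l1 b c d)). Qed.
Lemma T20 a c d : T a 0 c d = 0. Proof. exact: (lin0 (l2 a c d)). Qed.
Lemma T30 a b d : T a b 0 d = 0. Proof. exact: (lin0 (l3 a b d)). Qed.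
Lemma T40 a b c : T a b c 0 = 0. Proof. exact: (lin0 (l4 a b c)). Qed.

Lemma Tpair a b c d : T a b c d = T c d a b.
Proof. by case: hT => [_ [H _]]; apply: H. Qed.
Lemma T12 a b c d : T a b c d = - T b a c d.
Proof. by case: hT => [_ [_ [H _]]]; apply: H. Qed.
Lemma T34 a b c d : T a b c d = - T a b d c.
Proof. by rewrite Tpair T12 Tpair. Qed.
Lemma Tbianchi a b c d : T a b c d + T b c a d + T c a b d = 0.
Proof. by case: hT => [_ [_ [_ H]]]; apply: H. Qed.
Lemma Taa a c d : T a a c d = 0.
Proof. by have := T12 a a c d; lra. Qed.
Lemma Tcc a b c : T a b c c = 0.
Proof. by have := T34 a b c c; lra. Qed.
Lemma Tsym a z b : T a z z b = T b z z a.
Proof. by rewrite Tpair T12 T34 opprK. Qed.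
Lemma Trev a b c d : T a b c d = T d c b a.
Proof. by rewrite Tpair T12 T34 opprK. Qed.

Definition Rv a b c : 'rV[R]_m := \row_l T a b c (delta_mx 0 l).

Lemma dot_Rv a b c w : dot (Rv a b c) w = T a b c w.
Proof.
rewrite dotE (lin_sum (l4 a b c) w); apply: eq_bigr => i _.
by rewrite mxE mulrC.
Qed.

Lemma RvD1 u v b c : Rv (u + v) b c = Rv u b c + Rv v b c.
Proof. by apply: vec_ext => w; rewrite dotDl !dot_Rv T1D. Qed.
Lemma RvD2 u v a c : Rv a (u + v) c = Rv a u c + Rv a v c.
Proof. by apply: vec_ext => w; rewrite dotDl !dot_Rv T2D. Qed.
Lemma RvD3 u v a b : Rv a b (u + v) = Rv a b u + Rv a b v.
Proof. by apply: vec_ext => w; rewrite dotDl !dot_Rv T3D. Qed.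
Lemma RvZ1 k u b c : Rv (k *: u) b c = k *: Rv u b c.
Proof. by apply: vec_ext => w; rewrite dotZl !dot_Rv T1Z. Qed.
Lemma RvZ2 k u a c : Rv a (k *: u) c = k *: Rv a u c.
Proof. by apply: vec_ext => w; rewrite dotZl !dot_Rv T2Z. Qed.
Lemma RvZ3 k u a b : Rv a b (k *: u) = k *: Rv a b u.
Proof. by apply: vec_ext => w; rewrite dotZl !dot_Rv T3Z. Qed.
Lemma RvN1 u b c : Rv (- u) b c = - Rv u b c.
Proof. by apply: vec_ext => w; rewrite dotNl !dot_Rv T1N. Qed.
Lemma RvN2 u a c : Rv a (- u) c = - Rv a u c.
Proof. by apply: vec_ext => w; rewrite dotNl !dot_Rv T2N. Qed.
Lemma RvN3 u a b : Rv a b (- u) = - Rv a b u.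
Proof. by apply: vec_ext => w; rewrite dotNl !dot_Rv T3N. Qed.
Lemma Rv01 b c : Rv 0 b c = 0.
Proof. by apply: vec_eq0 => w; rewrite dot_Rv T10. Qed.
Lemma Rv02 a c : Rv a 0 c = 0.
Proof. by apply: vec_eq0 => w; rewrite dot_Rv T20. Qed.
Lemma Rv03 a b : Rv a b 0 = 0.
Proof. by apply: vec_eq0 => w; rewrite dot_Rv T30. Qed.
Lemma Rvaa a c : Rv a a c = 0.
Proof. by apply: vec_eq0 => w; rewrite dot_Rv Taa. Qed.

Lemma mul_jacobi y z : y *m jacobi T z = Rv y z z.
Proof.
apply/rowP => l; rewrite !mxE (lin_sum (fun k u v => l1 z z (delta_mx 0 l) k u v) y).
by apply: eq_bigr => i _; rewrite mxE.
Qed.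

Lemma jacobi_sym z : (jacobi T z)^T = jacobi T z.
Proof. by apply/matrixP => i j; rewrite !mxE Tsym. Qed.

Lemma dot_Rv_sym a z b : dot (Rv a z z) b = dot a (Rv b z z).
Proof. by rewrite dot_Rv dotC dot_Rv Tsym. Qed.

End Tensor.

Section JT.
Variables (R : realType) (m : nat) (T : tensor4 R m).
Hypothesis hT : is_ACT T.
Hypothesis hJT : jacobi_tsankov T.
Implicit Types (a b c d u v w y z : 'rV[R]_m).

Local Notation Rv := (Rv T).

Ltac exRv := repeat rewrite ?(RvD1 hT) ?(RvD2 hT) ?(RvD3 hT) ?(RvZ1 hT) ?(RvZ2 hT)
   ?(RvZ3 hT) ?(RvN1 hT) ?(RvN2 hT) ?(RvN3 hT).
Ltac exT := repeat rewrite ?dotDl ?dotZl ?dotNl ?dotBl ?(dot_Rv hT);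
  repeat rewrite ?(T1D hT) ?(T2D hT) ?(T3D hT) ?(T4D hT) ?(T1Z hT) ?(T2Z hT)
   ?(T3Z hT) ?(T4Z hT) ?(T1N hT) ?(T2N hT) ?(T3N hT) ?(T4N hT).
Ltac ex := exRv; exT.

Lemma JTv z q y : dot z q = 0 -> Rv (Rv y z z) q q = Rv (Rv y q q) z z.
Proof.
move=> zq; have := congr1 (mulmx y) (hJT zq).
by rewrite !mulmxA !(mul_jacobi hT).
Qed.

Lemma JTd z q y w : dot z q = 0 -> T (Rv y z z) q q w = T (Rv y q q) z z w.
Proof. by move=> zq; rewrite -!(dot_Rv hT) JTv. Qed.

Definition Co e f y := Rv y e f + Rv y f e.
Definition Ko z q y := dot q q *: Rv y z z + dot z z *: Rv y q q.

Lemma Rot z q y : dot z q = 0 -> dot z z + dot q q != 0 ->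
  Ko z q (Co z q y) = Co z q (Ko z q y).
Proof.
move=> zq nz; apply: vec_ext => w.
pose a := z + q; pose b := dot z z *: q - dot q q *: z.
have ab : dot a b = 0.
  by rewrite /a /b dotDl !dotDr !dotNr !dotZr (dotC q z) zq; ring.
have E1 := JTd y w ab.
have E2 := JTd y w zq.
have H : T (Rv y a a) b b w - T (Rv y b b) a a w =
   (dot z z + dot q q) * (dot (Ko z q (Co z q y)) w - dot (Co z q (Ko z q y)) w)
   + (dot z z ^+ 2 - dot q q ^+ 2) * (T (Rv y z z) q q w - T (Rv y q q) z z w).
  rewrite /a /b /Ko /Co; ex; ring.
move: H; rewrite E1 E2 !subrr mulr0 addr0 => /esym/eqP.
by rewrite mulf_eq0 (negbTE nz) /= subr_eq0 => /eqP.
Qed.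


Lemma Co_self1 e f : Co e f e = - Rv f e e.
Proof.
rewrite /Co (Rvaa hT) add0r; apply: vec_ext => w.
by rewrite dotNl !(dot_Rv hT) (T12 hT).
Qed.

Lemma Rv_swap12 a b c : Rv a b c = - Rv b a c.
Proof. by apply: vec_ext => w; rewrite dotNl !(dot_Rv hT) (T12 hT). Qed.

Lemma Rvzzz z : Rv z z z = 0.
Proof. exact: Rvaa. Qed.

Lemma F1 p q : dot p q = 0 -> Rv p q q = 0 -> Rv q p p = 0.
Proof.
move=> pq H; have [->|qnz] := eqVneq q 0; first exact: Rv01.
have Qp := dot_gt0 qnz.
have nz : dot p p + dot q q != 0.
  by apply: lt0r_neq0; apply: ltr_wpDl (dot_ge0 p) Qp.
have E := Rot p pq nz.
have K1 : Ko p q p = 0 by rewrite /Ko (Rvaa hT) H !scaler0 addr0.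
have C0 : Co p q 0 = 0 by rewrite /Co !(Rv01 hT) addr0.
rewrite Co_self1 K1 C0 /Ko !(RvN1 hT) (JTv q pq) (Rvaa hT) (Rv01 hT) oppr0 scaler0 addr0 in E.
move/eqP: E; rewrite scaler_eq0 (gt_eqF Qp) /= oppr_eq0 => /eqP E.
apply/eqP; rewrite -dot_eq0 {1}(dot_Rv_sym hT) E dot0r //.
Qed.

Lemma Comm2 z e f y : dot z e = 0 -> dot z f = 0 ->
  Rv (Co e f y) z z = Co e f (Rv y z z).
Proof.
move=> ze zf; apply: vec_ext => w.
have zef : dot z (e + f) = 0 by rewrite dotDr ze zf addr0.
have E1 := JTd y w zef; have E2 := JTd y w ze; have E3 := JTd y w zf.
have H : dot (Rv (Co e f y) z z) w - dot (Co e f (Rv y z z)) w =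
  (T (Rv y (e + f) (e + f)) z z w - T (Rv y z z) (e + f) (e + f) w)
  - (T (Rv y e e) z z w - T (Rv y z z) e e w)
  - (T (Rv y f f) z z w - T (Rv y z z) f f w).
  by rewrite /Co; ex; ring.
by move: H; rewrite E1 E2 E3 !subrr => /eqP; rewrite subr_eq0 => /eqP.
Qed.

End JT.

Section Eig.
Variables (R : realType) (m : nat) (T : tensor4 R m).
Hypothesis hT : is_ACT T.
Hypothesis hJT : jacobi_tsankov T.
Implicit Types (a b c d e f u v w y z : 'rV[R]_m).

Local Notation Rv := (Rv T).
Local Notation Co := (Co T).
Local Notation Ko := (Ko T).

Ltac exRv := repeat rewrite ?(RvD1 hT) ?(RvD2 hT) ?(RvD3 hT) ?(RvZ1 hT) ?(RvZ2 hT)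
   ?(RvZ3 hT) ?(RvN1 hT) ?(RvN2 hT) ?(RvN3 hT).
Ltac exT := repeat rewrite ?dotDl ?dotZl ?dotNl ?dotBl ?(dot_Rv hT);
  repeat rewrite ?(T1D hT) ?(T2D hT) ?(T3D hT) ?(T4D hT) ?(T1Z hT) ?(T2Z hT)
   ?(T3Z hT) ?(T4Z hT) ?(T1N hT) ?(T2N hT) ?(T3N hT) ?(T4N hT).
Ltac ex := exRv; exT.

Lemma eig_orth z u k : Rv u z z = k *: u -> k != 0 -> dot u z = 0.
Proof.
move=> H k0; have := dot_Rv hT u z z z; rewrite H dotZl (Tcc hT) => /eqP.
by rewrite mulf_eq0 (negbTE k0) => /eqP.
Qed.

Lemma eigL z u k : dot z z = 1 -> Rv u z z = k *: u -> k != 0 ->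
  Rv z u u = (k * dot u u) *: z.
Proof.
move=> z1 H k0; have uz := eig_orth H k0.
have zu : dot z u = 0 by rewrite dotC.
have nz : dot z z + dot u u != 0.
  by rewrite z1; apply: lt0r_neq0; apply: ltr_pwDl; rewrite ?ltr01 ?dot_ge0.
have E := Rot hT hJT u zu nz.
set g := Rv z u u.
have Cu : Co z u u = - g by rewrite /Co (Rvaa hT) addr0 (Rv_swap12 hT).
have Ku : Ko z u u = (dot u u * k) *: u by rewrite /Ko H (Rvaa hT) scaler0 addr0 scalerA.
have Jzg : Rv g z z = 0 by rewrite /g (JTv hT hJT _ uz) (Rvaa hT) (Rv01 hT).
have Cl : Co z u ((dot u u * k) *: u) = (dot u u * k) *: Co z u u.
  by rewrite /Co !(RvZ1 hT) scalerDr.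
rewrite Cu Ku Cl Cu /Ko !(RvN1 hT) Jzg oppr0 scaler0 add0r z1 scale1r in E.
move/eqP: E; rewrite scalerN eqr_opp => /eqP E.
have gz : dot g z = k * dot u u.
  by rewrite /g (dot_Rv hT) (Tpair hT) -(dot_Rv hT) H dotZl.
have gg : dot g g = (dot u u * k) * (k * dot u u).
  by rewrite {1}/g (dot_Rv_sym hT) E dotZr dotC gz.
apply/eqP; rewrite -subr_eq0 -dot_eq0; apply/eqP.
rewrite !(dotBl, dotBr, dotZl, dotZr) gg gz (dotC z g) gz z1; ring.
Qed.

Lemma eigK z u k v : Rv u z z = k *: u -> k != 0 -> dot v z = 0 -> Rv v z z = 0 ->
  Rv v u u = 0.
Proof.
move=> H k0 vz Av; have uz := eig_orth H k0.
have zu : dot z u = 0 by rewrite dotC.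
have zv : dot z v = 0 by rewrite dotC.
have C := Comm2 hT hJT u zu zv.
have Cl : Co u v (k *: u) = k *: Co u v u by rewrite /Co !(RvZ1 hT) scalerDr.
rewrite H Cl (Co_self1 hT) (RvN1 hT) (JTv hT hJT _ uz) Av (Rv01 hT) oppr0 in C.
by move/eqP: C; rewrite eq_sym scalerN oppr_eq0 scaler_eq0 (negbTE k0) => /eqP.
Qed.

Lemma eigG z q : dot z z = 1 -> dot z q = 0 ->
  dot (Rv z q q) (Rv z q q) = dot q q * dot (Rv q z z) (Rv q z z).
Proof.
move=> z1 zq; have qz : dot q z = 0 by rewrite dotC.
have nz : dot z z + dot q q != 0.
  by rewrite z1; apply: lt0r_neq0; apply: ltr_pwDl; rewrite ?ltr01 ?dot_ge0.
have E := Rot hT hJT q zq nz.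
set g := Rv z q q in E *; set h := Rv q z z in E *.
have Cq : Co z q q = - g by rewrite /Co (Rvaa hT) addr0 (Rv_swap12 hT).
have Kq : Ko z q q = dot q q *: h by rewrite /Ko (Rvaa hT) scaler0 addr0.
have Jg : Rv g z z = 0 by rewrite /g (JTv hT hJT _ qz) (Rvaa hT) (Rv01 hT).
have Cl : Co z q (dot q q *: h) = dot q q *: Co z q h.
  by rewrite /Co !(RvZ1 hT) scalerDr.
rewrite Cq Kq Cl /Ko !(RvN1 hT) Jg oppr0 scaler0 add0r z1 scale1r in E.
have L1 : dot (Rv g q q) z = dot g g.
  by rewrite (dot_Rv hT) (Tsym hT) -(dot_Rv hT).
have L2 : dot (Co z q h) z = - dot h h.
  rewrite /Co dotDl !(dot_Rv hT) (Tcc hT) addr0 (T34 hT) -(dot_Rv hT).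
  by rewrite (dot_Rv_sym hT) dotC (dot_Rv hT).
have := congr1 (fun v => dot v z) E; rewrite /= dotNl dotZl L1 L2.
by move=> H; apply: oppr_inj; rewrite H mulrN.
Qed.

Lemma Co_dot e f z h : dot (Co e f z) h = T h f e z + T h e f z.
Proof. by rewrite /Co dotDl !(dot_Rv hT) (Trev hT) [T z f e h](Trev hT) addrC. Qed.

Lemma cross_zero h e f w : Rv h e e = 0 -> Rv h f f = 0 ->
  Rv h (e + f) (e + f) = 0 -> T h e f w + T h f e w = 0.
Proof.
move=> He Hf Hef; have := congr1 (fun v => dot v w) Hef.
rewrite /= dot0l !(RvD2 hT) !(RvD3 hT) He Hf add0r addr0 dotDl !(dot_Rv hT).
by [].
Qed.

Lemma eigD z e f k l : dot z z = 1 -> Rv e z z = k *: e -> Rv f z z = l *: f ->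
  e != 0 -> f != 0 -> k != 0 -> l != 0 -> k = l.
Proof.
move=> z1 He Hf e0 f0 k0 l0.
have [//|kl] := eqVneq k l.
have ez := eig_orth He k0; have fz := eig_orth Hf l0.
have ze : dot z e = 0 by rewrite dotC.
have zf : dot z f = 0 by rewrite dotC.
have ef : dot e f = 0.
  have : k * dot e f = l * dot e f by rewrite -dotZl -He (dot_Rv_sym hT) Hf dotZr.
  move/eqP; rewrite -subr_eq0 -mulrBl mulf_eq0 subr_eq0 (negbTE kl) /=.
  by move/eqP.
have fe : dot f e = 0 by rewrite dotC.
have Le := eigL z1 He k0; have Lf := eigL z1 Hf l0.
set h := Co e f z.
have hz : dot h z = 0.
  rewrite /h Co_dot (Tpair hT) -(dot_Rv hT) He dotZl ef mulr0 add0r.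
  by rewrite (Tpair hT) -(dot_Rv hT) Hf dotZl fe mulr0.
have Ah : Rv h z z = 0.
  by rewrite /h (Comm2 hT hJT z ze zf) (Rvaa hT) /Co !(Rv01 hT) addr0.
have Khe := eigK He k0 hz Ah; have Khf := eigK Hf l0 hz Ah.
have he : dot h e = 0.
  rewrite /h /Co dotDl !(dot_Rv hT) (Tcc hT) addr0 (T34 hT) -(dot_Rv hT) Le.
  by rewrite dotZl zf mulr0 oppr0.
have hf : dot h f = 0.
  rewrite /h /Co dotDl !(dot_Rv hT) (Tcc hT) add0r (T34 hT) -(dot_Rv hT) Lf.
  by rewrite dotZl ze mulr0 oppr0.
have F1e := F1 hT hJT he Khe; have F1f := F1 hT hJT hf Khf.
have F1ef : Rv (e + f) h h = 0 by rewrite (RvD1 hT) F1e F1f addr0.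
have efh : dot (e + f) h = 0 by rewrite dotDl !(dotC _ h) he hf addr0.
have Hef := F1 hT hJT efh F1ef.
have hh : dot h h = 0.
  rewrite {1}/h Co_dot addrC; exact: cross_zero.
have Jq : Rv z (e + f) (e + f) = (k * dot e e + l * dot f f) *: z + h.
  rewrite !(RvD2 hT) !(RvD3 hT) Le Lf /h /Co; apply: vec_ext => w.
  rewrite !(dotDl, dotZl); ring.
have Aq : Rv (e + f) z z = k *: e + l *: f by rewrite (RvD1 hT) He Hf.
have zq : dot z (e + f) = 0 by rewrite dotDr ze zf addr0.
have G := eigG z1 zq.
rewrite Jq Aq in G; clearbody h.
move: G; rewrite !(dotDl, dotDr, dotZl, dotZr) z1 hz (dotC z h) hz hh ef fe.
move=> G.
have key : dot e e * dot f f * (k - l) ^+ 2 = 0 by lra.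
move/eqP: key; rewrite !mulf_eq0 subr_eq0 (negbTE kl) !orbF !dot_eq0.
by rewrite (negbTE e0) (negbTE f0).
Qed.

End Eig.

Section StepB.
Variables (R : realType) (m : nat) (T : tensor4 R m).
Hypothesis hT : is_ACT T.
Hypothesis hJT : jacobi_tsankov T.
Implicit Types (a b c d e f u v w y z : 'rV[R]_m).

Local Notation Rv := (Rv T).

Lemma stepB z e k : dot z z = 1 -> Rv e z z = k *: e -> e != 0 -> k != 0 ->
  jacobi T z *m jacobi T z = k *: jacobi T z.
Proof.
move=> z1 He e0 k0.
apply/eqP; rewrite -subr_eq0; apply/negPn/negP => Nnz.
have Nsym : (jacobi T z *m jacobi T z - k *: jacobi T z)^T =
    jacobi T z *m jacobi T z - k *: jacobi T z.
  by rewrite linearB /= linearZ /= trmx_mul (jacobi_sym hT).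
have [nu [nu0 /eigenvalueP [v Hv v0]]] := sym_eig_nz Nsym Nnz.
rewrite mulmxBr mulmxA -scalemxAr !(mul_jacobi hT) in Hv.
set a := Rv v z z in Hv.
have Ha : Rv a z z = k *: a + nu *: v.
  by rewrite -Hv addrC subrK.
have Vp := dot_gt0 v0.
have aa : dot a a = k * dot a v + nu * dot v v.
  by rewrite {1}/a (dot_Rv_sym hT) Ha dotDr !dotZr dotC.
have CS : 0 <= dot v v * (dot v v * dot a a - dot a v ^+ 2).
  have := dot_ge0 (dot v v *: a - dot a v *: v).
  rewrite !(dotBl, dotBr, dotZl, dotZr) (dotC v a).
  by move=> H; lra.
set V := dot v v in Vp aa CS; set s := dot a v in aa CS.
have CS' : 0 <= V * dot a a - s ^+ 2 by rewrite pmulr_rge0 in CS.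
have Dp : 0 <= k ^+ 2 + 4 * nu.
  have H : V ^+ 2 * (k ^+ 2 + 4 * nu) = 4 * (V * dot a a - s ^+ 2) + (2 * s - k * V) ^+ 2.
    by rewrite aa; ring.
  have : 0 <= V ^+ 2 * (k ^+ 2 + 4 * nu).
    by rewrite H; apply: addr_ge0; [apply: mulr_ge0 | apply: sqr_ge0].
  by rewrite pmulr_rge0 // exprn_gt0.
set r := Num.sqrt (k ^+ 2 + 4 * nu).
have rr : r ^+ 2 = k ^+ 2 + 4 * nu by rewrite sqr_sqrtr.
set mu1 := (k + r) / 2; set mu2 := (k - r) / 2.
have mu1E : mu1 = k - mu2 by rewrite /mu1 /mu2; field.
have nuE : nu = - (mu1 * mu2).
  have -> : mu1 * mu2 = (k ^+ 2 - r ^+ 2) / 4 by rewrite /mu1 /mu2; field.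
  by rewrite rr; field.
clearbody mu1 mu2.
have mu1nz : mu1 != 0 by apply: contra nu0 => /eqP m0; rewrite nuE m0 mul0r oppr0.
have mu2nz : mu2 != 0 by apply: contra nu0 => /eqP m0; rewrite nuE m0 mulr0 oppr0.
have He' : Rv (a - mu2 *: v) z z = mu1 *: (a - mu2 *: v).
  rewrite (RvD1 hT) (RvN1 hT) (RvZ1 hT) Ha -/a.
  apply: vec_ext => w; rewrite !(dotDl, dotNl, dotZl, dotBl).
  by rewrite nuE mu1E; ring.
have [e'0|e'nz] := eqVneq (a - mu2 *: v) 0.
  have Hv' : Rv v z z = mu2 *: v by apply/eqP; rewrite -subr_eq0 -/a e'0.
  have kE := eigD hT hJT z1 He Hv' e0 v0 k0 mu2nz.
  have m0 : mu1 = 0 by lra.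
  by move: mu1nz; rewrite m0 eqxx.
have kE := eigD hT hJT z1 He He' e0 e'nz k0 mu1nz.
have m0 : mu2 = 0 by lra.
by move: mu2nz; rewrite m0 eqxx.
Qed.

End StepB.

Section Sim.
Variable F : fieldType.

Lemma idem_pid n (E : 'M[F]_n) : E *m E = E ->
  exists2 P, P \in unitmx & P *m E = pid_mx (\rank E) *m P.
Proof.
move=> EE; set r := \rank E; set L := col_ebase E; set U := row_ebase E.
have Lu : L \in unitmx by apply: col_ebase_unit.
have EE' : L *m pid_mx r *m U = E by apply: mulmx_ebase.
have rn : (r <= n)%N by apply: rank_leq_row.
pose P := (pid_mx r : 'M_n) *m U + kermx E.
have kE : kermx E = copid_mx r *m invmx L by [].
have pU : (pid_mx r : 'M_n) *m U = pid_mx r *m invmx L *m E.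
  by rewrite -EE' !mulmxA mulmxKV // pid_mx_id.
have pP : (pid_mx r : 'M_n) *m P = pid_mx r *m U.
  by rewrite /P mulmxDr mulmxA pid_mx_id // kE mulmxA mul_pid_mx_copid // mul0mx addr0.
have cP : (copid_mx r : 'M_n) *m P = kermx E.
  by rewrite /P mulmxDr mulmxA mul_copid_mx_pid // mul0mx add0r kE mulmxA copid_mx_id.
exists P.
  rewrite -row_full_unit -sub1mx.
  have -> : (1%:M : 'M_n) = E + (1%:M - E) by rewrite addrC subrK.
  apply: addmx_sub.
    by rewrite -EE' -mulmxA -pP mulmxA submxMl.
  have k1 : (1%:M - E <= kermx E)%MS.
    by apply/sub_kermxP; rewrite mulmxBl mul1mx EE subrr.
  by apply: submx_trans k1 _; rewrite -cP submxMl.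
by rewrite pP /P mulmxDl mulmx_ker addr0 pU -!mulmxA EE.
Qed.

Lemma sim_lam n (M N : 'M[F]_n) l : l != 0 -> M *m M = l *: M ->
  N *m N = l *: N -> \rank M = \rank N -> similar_in unitmx M N.
Proof.
move=> l0 MM NN rMN.
have li : l^-1 != 0 by rewrite invr_eq0.
have idem (X : 'M[F]_n) : X *m X = l *: X -> (l^-1 *: X) *m (l^-1 *: X) = l^-1 *: X.
  move=> XX; rewrite -scalemxAl -scalemxAr XX !scalerA.
  by rewrite -mulrA mulVf // mulr1.
have [P Pu HP] := idem_pid (idem _ MM).
have [Q Qu HQ] := idem_pid (idem _ NN).
rewrite !mxrank_scale_nz // rMN in HP.
rewrite !mxrank_scale_nz // in HQ.
exists (invmx Q *m P); first by rewrite unitmx_mul unitmx_inv Qu.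
apply/similarP; first by rewrite unitmx_mul unitmx_inv Qu.
have HP' : P *m M = l *: (pid_mx (\rank N) *m P).
  by rewrite -HP scalemxAr scalerA mulfV // scale1r.
have pQ : invmx Q *m pid_mx (\rank N) = (l^-1 *: N) *m invmx Q.
  have pe : pid_mx (\rank N) = Q *m (l^-1 *: N) *m invmx Q by rewrite HQ mulmxK.
  by rewrite pe -!mulmxA mulKmx.
rewrite -mulmxA HP' -scalemxAr mulmxA pQ -!scalemxAl scalerA mulfV // scale1r.
by rewrite mulmxA.
Qed.

End Sim.

Ltac exRv hT := repeat rewrite ?(RvD1 hT) ?(RvD2 hT) ?(RvD3 hT) ?(RvZ1 hT) ?(RvZ2 hT)
   ?(RvZ3 hT) ?(RvN1 hT) ?(RvN2 hT) ?(RvN3 hT).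
Ltac exT hT := repeat rewrite ?dotDl ?dotZl ?dotNl ?dotBl ?(dot_Rv hT);
  repeat rewrite ?(T1D hT) ?(T2D hT) ?(T3D hT) ?(T4D hT) ?(T1Z hT) ?(T2Z hT)
   ?(T3Z hT) ?(T4Z hT) ?(T1N hT) ?(T2N hT) ?(T3N hT) ?(T4N hT).

Section Center.
Variables (R : realType) (m : nat) (T : tensor4 R m).
Hypothesis hT : is_ACT T.
Hypothesis hJT : jacobi_tsankov T.
Implicit Types (a b c d e f u v w y z : 'rV[R]_m).

Local Notation Rv := (Rv T).

Lemma W_decomp z w : (w <= Wspace T z)%MS -> exists (a : R) y, w = a *: z + Rv y z z.
Proof.
case/sub_addsmxP => [[u1 u2] /= ->]; exists (u1 0 0), u2.
by rewrite {1}[u1]mx11_scalar mul_scalar_mx (mul_jacobi hT).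
Qed.

Lemma RvW z y : (Rv y z z <= Wspace T z)%MS.
Proof. by rewrite -(mul_jacobi hT); apply: submx_trans (submxMl _ _) (addsmxSr _ _). Qed.

Lemma zW z : (z <= Wspace T z)%MS.
Proof. exact: addsmxSl. Qed.

Lemma W_perp z v : (forall u, (u <= Wspace T z)%MS -> dot v u = 0) ->
  dot v z = 0 /\ Rv v z z = 0.
Proof.
move=> H; split; first exact: H (zW z).
by apply: vec_eq0 => y; rewrite (dot_Rv_sym hT); apply: H; apply: RvW.
Qed.

Lemma Rv_eig z (k : R) y : jacobi T z *m jacobi T z = k *: jacobi T z ->
  Rv (Rv y z z) z z = k *: Rv y z z.
Proof.
by move=> A2; rewrite -!(mul_jacobi hT) -mulmxA A2 scalemxAr.
Qed.

Lemma W1 z (k : R) w v : k != 0 -> jacobi T z *m jacobi T z = k *: jacobi T z ->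
  (w <= Wspace T z)%MS -> dot v z = 0 -> Rv v z z = 0 -> Rv v w w = 0.
Proof.
move=> k0 A2 /W_decomp [a [y ->]] vz Av.
set u := Rv y z z.
have Ru : Rv u z z = k *: u by apply: Rv_eig.
have Fz := F1 hT hJT vz Av.
have Kv := eigK hT hJT Ru k0 vz Av.
have vu : dot v u = 0 by rewrite dotC /u (dot_Rv_sym hT) Av dot0r.
have Fu := F1 hT hJT vu Kv.
have Rw : Rv (a *: z + u) v v = 0 by rewrite (RvD1 hT) (RvZ1 hT) Fz Fu scaler0 addr0.
have wv : dot (a *: z + u) v = 0 by rewrite dotDl dotZl (dotC z) vz mulr0 (dotC u) vu addr0.
have := F1 hT hJT wv Rw. by [].
Qed.

Lemma W2 z (k : R) w : dot z z = 1 -> k != 0 -> jacobi T z *m jacobi T z = k *: jacobi T z ->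
  (w <= Wspace T z)%MS -> (jacobi T w <= Wspace T z)%MS.
Proof.
move=> z1 k0 A2 wW; apply/row_subP => i; rewrite rowE (mul_jacobi hT).
set g := Rv _ w w.
set r := g - dot g z *: z - k^-1 *: Rv g z z.
have rz : dot r z = 0.
  rewrite /r !(dotBl, dotZl) z1 mulr1 (dot_Rv hT) (Tcc hT) mulr0 subrr.
  by rewrite subr0.
have Ar : Rv r z z = 0.
  rewrite /r !(RvD1 hT) !(RvN1 hT) !(RvZ1 hT) (Rvaa hT) scaler0 subr0.
  by rewrite (Rv_eig _ A2) scalerA mulVf // scale1r subrr.
have Rr := W1 k0 A2 wW rz Ar.
have rr : dot r r = 0.
  rewrite {1}/r !(dotBl, dotZl) (dotC z r) rz mulr0 subr0 (dot_Rv_sym hT) Ar dot0r mulr0.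
  by rewrite subr0 /g (dot_Rv_sym hT) Rr dot0r.
have g_eq : g = dot g z *: z + (k^-1 *: g) *m jacobi T z.
  move/eqP: rr; rewrite dot_eq0 /r => /eqP H.
  by rewrite -scalemxAl (mul_jacobi hT); apply/eqP; rewrite -subr_eq0 opprD addrA H.
rewrite g_eq; apply: addmx_sub_adds; first by apply: scalemx_sub; apply: submx_refl.
exact: submxMl.
Qed.

Lemma R1 z : dot z z = 1 -> \rank (Wspace T z) = (\rank (jacobi T z)).+1.
Proof.
move=> z1; rewrite /Wspace mxrank_disjoint_sum.
  have z0 : z != 0 by apply/negP => /eqP z0; move: z1; rewrite z0 dot0l => /eqP; rewrite eq_sym oner_eq0.
  by rewrite rank_rV z0.
apply/eqP; rewrite -submx0; apply/row_subP => i; rewrite submx0.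
set r := row i _.
have rz : (r <= z)%MS by apply: submx_trans (row_sub _ _) (capmxSl _ _).
have rJ : (r <= jacobi T z)%MS by apply: submx_trans (row_sub _ _) (capmxSr _ _).
case/sub_rVP: rz => c rc; case/submxP: rJ => D rD.
have : c = 0.
  have := congr1 (fun v => dot v z) rD; rewrite /= (mul_jacobi hT) (dot_Rv hT) (Tcc hT).
  by rewrite rc dotZl z1 mulr1.
by move=> c0; rewrite rc c0 scale0r.
Qed.

Lemma jacobiZ (a : R) z : jacobi T (a *: z) = a ^+ 2 *: jacobi T z.
Proof. by apply/matrixP => i j; rewrite !mxE (T2Z hT) (T3Z hT) mulrA expr2. Qed.

End Center.

Theorem lemma2p3 (R : realType) (m : nat) (T : tensor4 R m) (x w : 'rV[R]_m) :
  (3 <= m)%N ->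
  is_ACT T ->
  jacobi_tsankov T ->
  (exists y z u v, T y z u v != 0) ->
  (forall y : 'rV[R]_m, (jrank T y < m.-1)%N) ->
  dot x x = 1 ->
  jrank T x != 0%N ->
  (w <= Wspace T x)%MS -> dot w w = 1 ->
  [/\ (jacobi T w <= Wspace T x)%MS
      /\ (forall v : 'rV[R]_m,
            (forall u : 'rV[R]_m, (u <= Wspace T x)%MS -> dot v u = 0) ->
            v *m jacobi T w = 0),
      similar_in unitmx (jacobi T w) (jacobi T x)
    & exists a b : R, [/\ a != b, eigenvalue (jacobi T x) a,
        eigenvalue (jacobi T x) b &
        forall c : R, eigenvalue (jacobi T x) c -> c = a \/ c = b]].
Proof.
move=> _ hT hJT _ _ x1 rx wW w1.
have Jnz : jacobi T x != 0 by move: rx; rewrite /jrank mxrank_eq0.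
have [l [l0 lev]] := sym_eig_nz (jacobi_sym hT x) Jnz.
have [e He e0] := eigenvalueP lev.
rewrite (mul_jacobi hT) in He.
have Ax := stepB hT hJT x1 He e0 l0.
have x0 : x != 0 by apply/negP => /eqP z0; move: x1; rewrite z0 dot0l => /eqP; rewrite eq_sym oner_eq0.
split.
- have := W2 hT hJT x1 l0 Ax wW => H.
  split; first exact: H.
  move=> v /(W_perp hT) [vx Av]; rewrite (mul_jacobi hT).
  have := W1 hT hJT l0 Ax wW vx Av. by [].
- have [a [y wE]] := W_decomp hT wW.
  set u := Rv T y x x in wE.
  have Ru : Rv T u x x = l *: u := Rv_eig hT y Ax.
  have ux : dot u x = 0 by rewrite /u (dot_Rv_sym hT) (Rvaa hT) dot0r.
  have a2 : a ^+ 2 + dot u u = 1.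
    by move: w1; rewrite wE !(dotDl, dotDr, dotZl, dotZr) x1 ux (dotC x u) ux; lra.
  clearbody u.
  have [u0|unz] := eqVneq u 0.
    exists 1%:M; first exact: unitmx1.
    apply/similarP; first exact: unitmx1.
    move: a2; rewrite u0 dot0l addr0 => a2.
    by rewrite mul1mx mulmx1 wE u0 addr0 (jacobiZ hT) (_ : a ^+ 2 = 1) ?scale1r.
  have Up := dot_gt0 unz.
  have Ue : dot u u = 1 - a ^+ 2 by lra.
  have Lu := eigL hT hJT x1 Ru l0.
  set w' := (- dot u u) *: x + a *: u.
  have Hw' : Rv T w' w w = l *: w'.
    apply: vec_ext => t; rewrite wE /w'; exRv hT; exT hT.
    have h1 : T u x x t = l * dot u t by rewrite -(dot_Rv hT) Ru dotZl.
    have h2 : T x u u t = l * dot u u * dot x t by rewrite -(dot_Rv hT) Lu dotZl.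
    have h5 : T x u x t = - (l * dot u t) by rewrite (T12 hT) h1.
    have h6 : T u x u t = - (l * dot u u * dot x t) by rewrite (T12 hT) h2.
    rewrite !(Taa hT) h5 h6 h1 h2 Ue; ring.
  have w'0 : w' != 0.
    rewrite -dot_eq0 /w' !(dotDl, dotDr, dotZl, dotZr) x1 ux (dotC x u) ux.
    by rewrite Ue; apply/eqP; rewrite Ue in Up; nra.
  have Bw := stepB hT hJT w1 Hw' w'0 l0.
  have xE : x = a *: w + (- l^-1 *: w') *m jacobi T w.
    rewrite -scalemxAl (mul_jacobi hT) Hw' scalerA mulNr mulVf // scaleN1r.
    apply: vec_ext => t; rewrite wE /w' !(dotDl, dotDr, dotZl, dotZr, dotNl).
    by rewrite Ue; ring.
  have xW : (x <= Wspace T w)%MS.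
    rewrite {1}xE; apply: addmx_sub_adds; last exact: submxMl.
    by apply: scalemx_sub; apply: submx_refl.
  have eqW : (Wspace T x == Wspace T w)%MS.
    apply/andP; split; rewrite addsmx_sub; apply/andP; split => //.
    - by have := W2 hT hJT w1 l0 Bw xW.
    - by have := W2 hT hJT x1 l0 Ax wW.
  have := eqmx_rank eqW; rewrite !(R1 hT) // => /eqP; rewrite eqSS => /eqP rk.
  by have := sim_lam l0 Bw Ax (esym rk).
- exists 0, l; split.
  + by rewrite eq_sym.
  + by apply/eigenvalueP; exists x => //; rewrite (mul_jacobi hT) (Rvaa hT) scale0r.
  + exact: lev.
  move=> c /eigenvalueP [v Hv v0].
  have : (c * (c - l)) *: v = 0.
    have E1 : v *m (jacobi T x *m jacobi T x) = (c * c) *: v.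
      by rewrite mulmxA Hv -scalemxAl Hv scalerA.
    have E2 : v *m (jacobi T x *m jacobi T x) = (l * c) *: v.
      by rewrite Ax -scalemxAr Hv scalerA.
    by rewrite mulrBr scalerBl -E1 [c * l]mulrC -E2 subrr.
  move/eqP; rewrite scaler_eq0 (negbTE v0) orbF mulf_eq0 subr_eq0.
  by case/orP => /eqP ->; [left | right].
Qed.
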